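(* For each integer $m\ge0$, both $\{G_j(x)^{q^m}\}_{j\ge0}$ and $\{D_j(x)^{q^m}\}_{j\ge0}$ are orthonormal bases of $C(O,K)$.
   Context: Let $q$ be a prime power, $K=\mathbf{F}_q((T))$, $O=\mathbf{F}_q[[T]]$ with $T$-adic absolute value. $C(O,K)$ is the $K$-Banach space of continuous functions $O\to K$ with sup-norm; a sequence $(f_n)$ is an orthonormal basis if every $f$ can be written uniquely as $f=\sum a_nf_n$ with $a_n\in K$, $a_n\to0$, and then $\|f\|=\max|a_n|$. For $n\ge1$: $[n]=T^{q^n}-T$, $F_0=1$, $F_n=[n][n-1]^q\cdots[1]^{q^{n-1}}$, $e_n(x)=\prod_{m\in\mathbf{F}_q[T],\deg m<n}(x-m)$; $E_0(x)=x$, $E_n=e_n/F_n$. Hasse derivatives: $\mathcal{D}_n(\sum_ia_iT^i)=\sum_i\binom{i}{n}a_iT^{i-n}$ (binomials in $\mathbf{F}_q$). For $j\ge0$ with base-$q$ expansion $j=\alpha_0+\cdots+\alpha_sq^s$ ($0\le\alpha_i<q$): $G_j=\prod_{n=0}^sE_n^{\alpha_n}$, $D_j=\prod_{n=0}^s\mathcal{D}_n^{\alpha_n}$ ($G_0=D_0=1$). *)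

(* Defs.v *)
From HB Require Import structures.
From mathcomp Require Import all_boot all_order all_algebra.
From mathcomp Require Import classical_sets reals.
From mathcomp Require Import Rstruct.
From Stdlib Require Import ClassicalEpsilon.

Set Implicit Arguments.
Unset Strict Implicit.
Unset Printing Implicit Defensive.

Import Order.TTheory GRing.Theory Num.Theory.
Local Open Scope ring_scope.
Notation R := Rdefinitions.R.

Section Laurent.
Variable F : finFieldType.

Definition qq : nat := #|F|.

(** Laurent series: coefficient functions Z -> F vanishing below some index. *)
Definition lbounded (f : int -> F) := exists N : int, forall n : int, n < N -> f n = 0.

Record K := MkK { kcoef : int -> F; kbnd : lbounded kcoef }.

Definition klb (x : K) : int :=
  proj1_sig (constructive_indefinite_description _ (kbnd x)).
Lemma klbP (x : K) n : n < klb x -> kcoef x n = 0.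
Proof. by rewrite /klb; case: constructive_indefinite_description => N HN /=; apply: HN. Qed.

Lemma kzero_bnd : lbounded (fun _ => 0). Proof. by exists 0. Qed.
Definition kzero : K := MkK kzero_bnd.

Definition kpoly_coef (p : {poly F}) (n : int) : F :=
  match n with Posz k => p`_k | Negz _ => 0 end.
Lemma kpoly_bnd p : lbounded (kpoly_coef p).
Proof. by exists 0; case. Qed.
Definition kpoly (p : {poly F}) : K := MkK (kpoly_bnd p).
Definition kone : K := kpoly 1.

Lemma kadd_bnd (x y : K) : lbounded (fun n => kcoef x n + kcoef y n).
Proof.
exists (Num.min (klb x) (klb y)) => n; rewrite lt_min => /andP[hx hy].
by rewrite !klbP // addr0.
Qed.
Definition kadd (x y : K) : K := MkK (kadd_bnd x y).

Lemma kopp_bnd (x : K) : lbounded (fun n => - kcoef x n).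
Proof. by exists (klb x) => n hn; rewrite klbP // oppr0. Qed.
Definition kopp (x : K) : K := MkK (kopp_bnd x).
Definition ksub (x y : K) : K := kadd x (kopp y).

(** Cauchy product: coefficient n is sum_{i = lx}^{n - ly} x_i y_{n-i} *)
Definition kmul_coef (x y : K) (n : int) : F :=
  let d := n - klb x - klb y in
  if d < 0 then 0 else
  \sum_(k < (absz d).+1) kcoef x (klb x + k%:Z) * kcoef y (n - klb x - k%:Z).
Lemma kmul_bnd x y : lbounded (kmul_coef x y).
Proof.
exists (klb x + klb y) => n hn; rewrite /kmul_coef ifT //.
by rewrite -addrA -opprD subr_lt0.
Qed.
Definition kmul (x y : K) : K := MkK (kmul_bnd x y).

Definition kexp (x : K) (k : nat) : K := iter k (kmul x) kone.
Definition kprod (s : seq K) : K := foldr kmul kone s.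
Definition ksum (s : seq K) : K := foldr kadd kzero s.

Definition kval (x : K) : option int :=
  match excluded_middle_informative
          (exists k : nat, kcoef x (klb x + k%:Z) != 0) with
  | left h => Some (klb x + (ex_minn h)%:Z)
  | right _ => None
  end.

(** inverse of a unit power series a_0 + a_1 T + ... (a_0 <> 0):
    b_0 = a_0^-1, b_k = - a_0^-1 * sum_{i=1}^k a_i b_{k-i} *)
Fixpoint invs (a : nat -> F) (k : nat) : seq F :=
  match k with
  | 0 => [:: (a 0%N)^-1]
  | k'.+1 => let s := invs a k' in
      rcons s (- (a 0%N)^-1 * \sum_(i < k'.+1) a i.+1 * nth 0 s (k' - i))
  end.
Definition invc (a : nat -> F) (k : nat) : F := nth 0 (invs a k) k.

(** x = T^v (a_0 + a_1 T + ...), x^-1 = T^-v (b_0 + b_1 T + ...);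
    the inverse of 0 is set to 0 *)
Definition kinv_coef (x : K) (n : int) : F :=
  match kval x with
  | Some v => if n + v is Posz k then invc (fun i => kcoef x (v + i%:Z)) k else 0
  | None => 0
  end.
Lemma kinv_bnd x : lbounded (kinv_coef x).
Proof.
rewrite /kinv_coef; case: (kval x) => [v|]; last by exists 0.
exists (- v) => n hn; case E: (n + v) => [k|//].
by move: hn; rewrite -subr_lt0 opprK E.
Qed.
Definition kinv (x : K) : K := MkK (kinv_bnd x).
Definition kdiv (x y : K) : K := kmul x (kinv y).

Definition absK (x : K) : R :=
  match kval x with Some v => (qq%:R : R) ^ (- v) | None => 0 end.

(** O = F_q[[T]] as the elements of K with no negative coefficients *)
Record O := MkO { oval : K; oint : forall n : int, n < 0 -> kcoef oval n = 0 }.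

Definition kcontinuous (f : O -> K) : Prop :=
  forall (x : O) (e : R), 0 < e -> exists2 d : R, 0 < d &
    forall y : O, absK (ksub (oval y) (oval x)) < d -> absK (ksub (f y) (f x)) < e.

Definition supnorm (f : O -> K) : R := sup [set absK (f x) | x in [set: O]].

Definition kcvg0 (a : nat -> K) : Prop :=
  forall e : R, 0 < e -> exists N : nat, forall n, (N <= n)%N -> absK (a n) < e.

Definition psum (b : nat -> O -> K) (a : nat -> K) (N : nat) : O -> K :=
  fun x => ksum [seq kmul (a n) (b n x) | n <- iota 0 N].

Definition expansion (b : nat -> O -> K) (f : O -> K) (a : nat -> K) : Prop :=
  kcvg0 a /\
  forall e : R, 0 < e -> exists N0 : nat, forall N, (N0 <= N)%N ->
    supnorm (fun x => ksub (f x) (psum b a N x)) < e.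

Definition orthonormal_basis (b : nat -> O -> K) : Prop :=
  (forall n, kcontinuous (b n)) /\
  forall f : O -> K, kcontinuous f ->
    (exists a, expansion b f a) /\
    (forall a a', expansion b f a -> expansion b f a' -> a = a') /\
    (forall a, expansion b f a ->
       (exists n, supnorm f = absK (a n)) /\ (forall n, absK (a n) <= supnorm f)).

Definition bracket (n : nat) : {poly F} := 'X^(qq ^ n) - 'X.
Definition Fpol (n : nat) : {poly F} :=
  \prod_(1 <= i < n.+1) bracket i ^+ (qq ^ (n - i)).

(** e_n(x) = prod_{m in F[T], deg m < n} (x - m); the polynomials of degree
    < n are exactly Poly t for t an n-tuple of coefficients *)
Definition e_n (n : nat) (x : K) : K :=
  kprod [seq ksub x (kpoly (Poly (tval t))) | t <- enum {: n.-tuple F}].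

Definition E_n (n : nat) (x : K) : K :=
  if n is 0%N then x else kdiv (e_n n x) (kpoly (Fpol n)).

Definition hasse_coef (n : nat) (x : K) (k : int) : F :=
  match k + n%:Z with Posz i => ('C(i, n))%:R * kcoef x (k + n%:Z) | Negz _ => 0 end.
Lemma hasse_bnd n x : lbounded (hasse_coef n x).
Proof.
exists (klb x - n%:Z) => k hk; rewrite /hasse_coef.
have h : k + n%:Z < klb x by rewrite -ltrBrDr.
by case: (k + n%:Z) h => // i h; rewrite klbP ?mulr0.
Qed.
Definition hasse (n : nat) (x : K) : K := MkK (hasse_bnd n x).

Definition digit (j i : nat) : nat := (j %/ qq ^ i) %% qq.
Definition top_digit (j : nat) : nat := trunc_log qq j.

Definition G (j : nat) (x : O) : K :=
  kprod [seq kexp (E_n n (oval x)) (digit j n) | n <- iota 0 (top_digit j).+1].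
Definition D (j : nat) (x : O) : K :=
  kprod [seq kexp (hasse n (oval x)) (digit j n) | n <- iota 0 (top_digit j).+1].

End Laurent.

(* Main.v *)
Require Import Defs.
From HB Require Import structures.
From mathcomp Require Import all_boot all_order all_algebra.
From mathcomp Require Import classical_sets reals Rstruct.
From mathcomp Require Import finfield zify ring lra.
From Stdlib Require Import ProofIrrelevance FunctionalExtensionality ClassicalEpsilon.
Unset Printing Implicit Defensive.
Import Order.TTheory GRing.Theory Num.Theory.
Local Open Scope ring_scope.

Section Found.
Context {F : finFieldType}.
Local Notation K := (K F).
Local Notation O := (O F).
Implicit Types (x y z : K) (l L : int).

Definition vge (x : K) (l : int) := forall n : int, n < l -> kcoef x n = 0.
Definition agr (x y : K) (l : int) := forall n : int, n < l -> kcoef x n = kcoef y n.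

Lemma keq (x y : K) : (forall n, kcoef x n = kcoef y n) -> x = y.
Proof.
case: x => cx bx; case: y => cy by0 /= h.
have e : cx = cy by apply: functional_extensionality.
subst; f_equal; apply: proof_irrelevance.
Qed.

Lemma vgeW x l l' : l' <= l -> vge x l -> vge x l'.
Proof. by move=> h hx n hn; apply: hx; apply: lt_le_trans hn h. Qed.

Lemma agrW x y l l' : l' <= l -> agr x y l -> agr x y l'.
Proof. by move=> h hx n hn; apply: hx; apply: lt_le_trans hn h. Qed.

Lemma agr_refl x l : agr x x l. Proof. by []. Qed.
Lemma agr_sym x y l : agr x y l -> agr y x l.
Proof. by move=> h n hn; rewrite h. Qed.
Lemma agr_trans x y z l : agr x y l -> agr y z l -> agr x z l.
Proof. by move=> h1 h2 n hn; rewrite h1 ?h2. Qed.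

Lemma vge_agr x y l : vge x l -> agr x y l -> vge y l.
Proof. by move=> h1 h2 n hn; rewrite -h2 ?h1. Qed.

Lemma vge_klb x : vge x (klb x).
Proof. by move=> n hn; apply: klbP. Qed.

Lemma kaddE x y n : kcoef (kadd x y) n = kcoef x n + kcoef y n. Proof. by []. Qed.
Lemma koppE x n : kcoef (kopp x) n = - kcoef x n. Proof. by []. Qed.
Lemma ksubE x y n : kcoef (ksub x y) n = kcoef x n - kcoef y n. Proof. by []. Qed.
Lemma kzeroE n : kcoef (@kzero F) n = 0. Proof. by []. Qed.

Definition Gs (x y : K) (n L : int) (N : nat) :=
  \sum_(k < N) kcoef x (L + k%:Z) * kcoef y (n - L - k%:Z).

Lemma Gs_cover x y n L N N' Ly : vge y Ly -> n - Ly < L + N%:Z -> (N <= N')%N ->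
  Gs x y n L N' = Gs x y n L N.
Proof.
move=> hy hc hN; rewrite /Gs -(subnKC hN) big_split_ord /= [X in _ + X]big1 ?addr0 // => i _.
rewrite hy ?mulr0 //; lia.
Qed.

Lemma Gs_any x y n L N N' Ly : vge y Ly -> n - Ly < L + N%:Z -> n - Ly < L + N'%:Z ->
  Gs x y n L N = Gs x y n L N'.
Proof.
move=> hy h1 h2; case: (leqP N N') => h.
  by rewrite (@Gs_cover x y n L N N' Ly hy h1 h).
by rewrite (@Gs_cover x y n L N' N Ly hy h2 (ltnW h)).
Qed.

Lemma Gs_low x y n L N (j : nat) : (forall i : nat, (i < j)%N -> kcoef x (L - (i.+1)%:Z) = 0) ->
  Gs x y n (L - j%:Z) (N + j) = Gs x y n L N.
Proof.
elim: j => [|j IH] h; first by rewrite subr0 addn0.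
rewrite addnS -IH; last by move=> i hi; apply: h; lia.
rewrite /Gs big_ord_recl /=.
have -> : L - (j.+1)%:Z + 0%N%:Z = L - (j.+1)%:Z by lia.
rewrite h // mul0r add0r; apply: eq_bigr => i _.
have -> : L - (j.+1)%:Z + (bump 0 i)%:Z = L - j%:Z + i%:Z by rewrite /bump /=; lia.
by have -> : n - (L - (j.+1)%:Z) - (bump 0 i)%:Z = n - (L - j%:Z) - i%:Z by rewrite /bump /=; lia.
Qed.

Lemma Gs_eq x y n L1 L2 N1 N2 Ly : vge x L1 -> vge x L2 -> vge y Ly ->
  n - Ly < L1 + N1%:Z -> n - Ly < L2 + N2%:Z -> Gs x y n L1 N1 = Gs x y n L2 N2.
Proof.
move=> hx1 hx2 hy.
wlog le12 : L1 L2 N1 N2 hx1 hx2 / L1 <= L2.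
  move=> W h1 h2; case: (lerP L1 L2) => h; first exact: W.
  by symmetry; apply: W => //; apply: ltW.
move=> h1 h2.
have [j hj] : exists j : nat, L2 - L1 = j%:Z by exists `|L2 - L1|%N; rewrite gez0_abs // subr_ge0.
have eL : L1 = L2 - j%:Z by lia.
rewrite -(@Gs_low x y n L2 N2 j); last by move=> i hi; apply: hx2; lia.
rewrite -eL; apply: (@Gs_any x y n L1 N1 (N2 + j) Ly hy h1); lia.
Qed.

Lemma kmulE_Gs x y n : kcoef (kmul x y) n =
  Gs x y n (klb x) (if n - klb x - klb y < 0 then 0%N else (absz (n - klb x - klb y)%R).+1).
Proof.
rewrite /= /kmul_coef; case: ifP => h; first by rewrite /Gs big_ord0.
by [].
Qed.

Lemma vge_max x l1 l2 : vge x l1 -> vge x l2 -> vge x (Num.max l1 l2).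
Proof.
move=> h1 h2 n; rewrite /Num.max; case: ifP => _ hn; [exact: h2 | exact: h1].
Qed.

Lemma conv x y Lx Ly n N : vge x Lx -> vge y Ly -> n - Ly < Lx + N%:Z ->
  kcoef (kmul x y) n = Gs x y n Lx N.
Proof.
move=> hx hy hc; rewrite kmulE_Gs.
have hy2 := vge_max y _ _ hy (vge_klb y).
have hm1 : Ly <= Num.max Ly (klb y) by rewrite le_max lexx.
have hm2 : klb y <= Num.max Ly (klb y) by rewrite le_max lexx orbT.
apply: (Gs_eq x y n _ _ _ _ _ (vge_klb x) hx hy2).
- case: ifP => h; first by lia.
  have e : (absz (n - klb x - klb y)%R)%:Z = n - klb x - klb y.
    by rewrite gez0_abs // leNgt h.
  lia.
- lia.
Qed.

End Found.

Section Prod.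
Context {F : finFieldType}.
Local Notation K := (K F).
Local Notation O := (O F).
Implicit Types (x y z : K) (l L : int).

Lemma kmul_vge x y Lx Ly : vge x Lx -> vge y Ly -> vge (kmul x y) (Lx + Ly).
Proof.
move=> hx hy n hn; rewrite (conv x y Lx Ly n 0 hx hy); last by lia.
by rewrite /Gs big_ord0.
Qed.

Lemma kmul_lead x y Lx Ly : vge x Lx -> vge y Ly ->
  kcoef (kmul x y) (Lx + Ly) = kcoef x Lx * kcoef y Ly.
Proof.
move=> hx hy; rewrite (conv x y Lx Ly _ 1 hx hy); last by lia.
rewrite /Gs big_ord1 /= addr0; congr (_ * _); congr (kcoef y _); lia.
Qed.

Lemma kmul_agr x x' y y' Lx Ly A B : vge x Lx -> vge x' Lx -> vge y Ly -> vge y' Ly ->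
  agr x x' A -> agr y y' B -> agr (kmul x y) (kmul x' y') (Num.min (A + Ly) (B + Lx)).
Proof.
move=> hx hx' hy hy' ha hb n; rewrite lt_min => /andP[h1 h2].
set N := (absz (n - Ly - Lx)%R).+1.
have hc : n - Ly < Lx + N%:Z.
  rewrite /N; case: (lerP 0 (n - Ly - Lx)) => h.
    have := gez0_abs h; lia.
  lia.
rewrite (conv x y Lx Ly n N hx hy hc) (conv x' y' Lx Ly n N hx' hy' hc).
apply: eq_bigr => k _.
case: (ltrP (Lx + k%:Z) A) => hk.
  by rewrite ha // hb //; lia.
by rewrite hy ?hy' ?mulr0 //; lia.
Qed.

Lemma kmul_agr0 x x' y y' l : vge x 0 -> vge x' 0 -> vge y 0 -> vge y' 0 ->
  agr x x' l -> agr y y' l -> agr (kmul x y) (kmul x' y') l.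
Proof.
move=> hx hx' hy hy' ha hb.
have := kmul_agr x x' y y' 0 0 l l hx hx' hy hy' ha hb.
by rewrite !addr0 minxx.
Qed.

Lemma kmul_lin x1 x2 x3 y L Ly n : vge x1 L -> vge x2 L -> vge x3 L -> vge y Ly ->
  (forall i, kcoef x3 i = kcoef x1 i + kcoef x2 i) ->
  kcoef (kmul x3 y) n = kcoef (kmul x1 y) n + kcoef (kmul x2 y) n.
Proof.
move=> h1 h2 h3 hy he.
set N := (absz (n - Ly - L)%R).+1.
have hc : n - Ly < L + N%:Z.
  rewrite /N; case: (lerP 0 (n - Ly - L)) => h.
    have := gez0_abs h; lia.
  lia.
rewrite (conv _ _ _ _ n N h1 hy hc) (conv _ _ _ _ n N h2 hy hc) (conv _ _ _ _ n N h3 hy hc).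
by rewrite /Gs -big_split /=; apply: eq_bigr => k _; rewrite he mulrDl.
Qed.

Lemma kmul_zero x y : (forall i, kcoef x i = 0) -> forall n, kcoef (kmul x y) n = 0.
Proof.
move=> hx n.
have hx' : vge x (n + 1 - klb y) by move=> i _; apply: hx.
by apply: (kmul_vge x y _ _ hx' (vge_klb y)); lia.
Qed.

Lemma ksumE (s : seq K) n : kcoef (ksum s) n = \sum_(z <- s) kcoef z n.
Proof. by elim: s => [|z s IH]; rewrite ?big_nil ?big_cons // -IH. Qed.

Lemma koneE n : kcoef (kone F) n = if n == 0 then 1 else 0.
Proof.
rewrite /kone /= /kpoly_coef; case: n => [k|k] //=.
by rewrite coefC; case: k.
Qed.

Lemma kone_vge : vge (kone F) 0.
Proof. by move=> n hn; rewrite koneE; case: eqP => // e; move: hn; rewrite e. Qed.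

Lemma kmul_O x y : vge x 0 -> vge y 0 -> vge (kmul x y) 0 /\ kcoef (kmul x y) 0 = kcoef x 0 * kcoef y 0.
Proof.
move=> hx hy; split; first by have := kmul_vge x y 0 0 hx hy; rewrite addr0.
by have := kmul_lead x y 0 0 hx hy; rewrite addr0.
Qed.

Lemma kprod_lead (T : Type) (f : T -> K) (u : T -> int) (r : seq T) :
  (forall i, vge (f i) (u i)) ->
  vge (kprod (map f r)) (\sum_(i <- r) u i) /\
  kcoef (kprod (map f r)) (\sum_(i <- r) u i) = \prod_(i <- r) kcoef (f i) (u i).
Proof.
move=> h; elim: r => [|z s [IH1 IH2]].
  by rewrite !big_nil; split; [exact: kone_vge | rewrite koneE].
change (kprod (map f (z :: s))) with (kmul (f z) (kprod (map f s))).
rewrite !big_cons; split; first exact: kmul_vge.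
by rewrite kmul_lead // IH2.
Qed.

Lemma kprod_O (T : Type) (f : T -> K) (r : seq T) : (forall i, vge (f i) 0) ->
  vge (kprod (map f r)) 0 /\ kcoef (kprod (map f r)) 0 = \prod_(i <- r) kcoef (f i) 0.
Proof.
move=> h; have := kprod_lead T f (fun _ => 0) r h.
by rewrite big1_eq.
Qed.

Lemma kprod_agr (T : Type) (f g : T -> K) (r : seq T) l : (forall i, vge (f i) 0) ->
  (forall i, vge (g i) 0) -> (forall i, agr (f i) (g i) l) ->
  agr (kprod (map f r)) (kprod (map g r)) l.
Proof.
move=> hf hg ha; elim: r => [|z s IH] //.
change (agr (kmul (f z) (kprod (map f s))) (kmul (g z) (kprod (map g s))) l).
apply: kmul_agr0 => //.
- by case: (kprod_O T f s hf).
- by case: (kprod_O T g s hg).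
Qed.

Lemma kexp_O y k : vge y 0 -> vge (kexp y k) 0 /\ kcoef (kexp y k) 0 = kcoef y 0 ^+ k.
Proof.
move=> hy; elim: k => [|k [IH1 IH2]].
  by split; [exact: kone_vge | rewrite expr0 (koneE 0)].
have [h3 h4] := kmul_O y (kexp y k) hy IH1.
change (kexp y k.+1) with (kmul y (kexp y k)).
by split => //; rewrite exprS h4 IH2.
Qed.

Lemma kexp_agr y y' k l : vge y 0 -> vge y' 0 -> agr y y' l -> agr (kexp y k) (kexp y' k) l.
Proof.
move=> hy hy' ha; elim: k => [|k IH] //.
change (agr (kmul y (kexp y k)) (kmul y' (kexp y' k)) l).
apply: kmul_agr0 => //; by [case: (kexp_O y k hy) | case: (kexp_O y' k hy')].
Qed.

End Prod.


Section Abs.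
Context {F : finFieldType}.
Local Notation K := (K F).
Local Notation O := (O F).
Implicit Types (x y z : K) (l L : int).

Definition qR : R := (qq F)%:R.

Lemma qq_gt1 : (1 < qq F)%N.
Proof. by apply/card_gt1P; exists 0, 1; split; rewrite ?inE // eq_sym oner_neq0. Qed.

Lemma qR_gt1 : 1 < qR.
Proof. by rewrite /qR ltr1n qq_gt1. Qed.

Lemma qR_gt0 : 0 < qR.
Proof. by apply: lt_trans qR_gt1. Qed.

Lemma qpow_gt0 l : 0 < qR ^ l.
Proof. exact: exprz_gt0 qR_gt0. Qed.

Lemma qpow_le l l' : (qR ^ l <= qR ^ l') = (l <= l').
Proof. exact: (ler_eXz2l qR_gt1). Qed.

Lemma qpow_lt l l' : (qR ^ l < qR ^ l') = (l < l').
Proof. exact: (ltr_eXz2l qR_gt1). Qed.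

Lemma kval_some x v : vge x v -> kcoef x v != 0 -> kval x = Some v.
Proof.
move=> hv hn; rewrite /kval; case: excluded_middle_informative => [h|h].
  case: ex_minnP => m hm hmin.
  have hl : klb x <= v.
    rewrite leNgt; apply/negP => hlt; move/eqP: hn; apply; exact: vge_klb.
  have [k hk] : exists k : nat, v - klb x = k%:Z by exists `|v - klb x|%N; rewrite gez0_abs // subr_ge0.
  have ev : v = klb x + k%:Z by lia.
  have h1 : (m <= k)%N by apply: hmin; rewrite -ev.
  have h2 : ~ (klb x + m%:Z < v).
    by move=> hlt; move: hm; rewrite hv // eqxx.
  congr Some; lia.
exfalso; apply: h.
have hl : klb x <= v.
  rewrite leNgt; apply/negP => hlt; move/eqP: hn; apply; exact: vge_klb.
exists `|v - klb x|%N; rewrite gez0_abs ?subr_ge0 //.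
by have -> : klb x + (v - klb x) = v by lia.
Qed.

Lemma kval_spec x : match kval x with
  | Some v => vge x v /\ kcoef x v != 0
  | None => forall n, kcoef x n = 0 end.
Proof.
rewrite /kval; case: excluded_middle_informative => [h|h].
  case: ex_minnP => m hm hmin; split => //.
  move=> n hn; case: (ltrP n (klb x)) => h1; first exact: vge_klb.
  have [k hk] : exists k : nat, n - klb x = k%:Z by exists `|n - klb x|%N; rewrite gez0_abs // subr_ge0.
  have en : n = klb x + k%:Z by lia.
  apply/eqP; apply: contraT => hk2.
  have := hmin k; rewrite -en => /(_ hk2); lia.
move=> n; case: (ltrP n (klb x)) => h1; first exact: vge_klb.
apply/eqP; apply: contraT => hk2; exfalso; apply: h.
exists `|n - klb x|%N; rewrite gez0_abs ?subr_ge0 //.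
by have -> : klb x + (n - klb x) = n by lia.
Qed.

Lemma absK_ge0 x : 0 <= absK x.
Proof. rewrite /absK; case: kval => [v|] //; exact: ltW (qpow_gt0 _). Qed.

Lemma absK_vge x l : vge x l -> absK x <= qR ^ (- l).
Proof.
move=> h; rewrite /absK; have := kval_spec x; case: kval => [v [hv hn]|_].
  rewrite qpow_le lerN2 leNgt; apply/negP => hlt.
  by move: hn; rewrite h ?eqxx.
exact: ltW (qpow_gt0 _).
Qed.

Lemma absK_lt x l : absK x < qR ^ (- l) -> vge x (l + 1).
Proof.
rewrite /absK; have := kval_spec x; case: kval => [v [hv hn]|h] hl; last by move=> n _; apply: h.
move: hl; rewrite qpow_lt ltrN2 => hl.
apply: vgeW hv; lia.
Qed.

Lemma absK_eq x v : vge x v -> kcoef x v != 0 -> absK x = qR ^ (- v).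
Proof. by move=> h1 h2; rewrite /absK (kval_some x v h1 h2). Qed.

Lemma absK_zero x : (forall n, kcoef x n = 0) -> absK x = 0.
Proof.
move=> h; rewrite /absK; have := kval_spec x; case: kval => [v [hv hn]|//].
by move: hn; rewrite h eqxx.
Qed.

Lemma absK_eq0 x : absK x = 0 -> forall n, kcoef x n = 0.
Proof.
rewrite /absK; have := kval_spec x; case: kval => [v [hv hn]|h] //.
by move=> e; have := qpow_gt0 (- v); rewrite e ltxx.
Qed.

Lemma small_exists (e : R) : 0 < e -> exists l : nat, qR ^ (- l%:Z) < e.
Proof.
move=> he; have h0 : 0 <= e^-1 by rewrite invr_ge0 ltW.
set n := Num.bound e^-1; exists n.
have h1 := archi_boundP h0.
rewrite -invr_expz -[X in _ < X]invrK ltf_pV2 ?posrE ?invr_gt0 ?qpow_gt0 //.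
apply: lt_trans h1 _.
have -> : qR ^ (n%:Z) = ((qq F) ^ n)%:R by rewrite /qR natrX.
rewrite ltr_nat; exact: ltn_expl qq_gt1.
Qed.

Lemma agr_sub x y l : agr x y l <-> vge (ksub x y) l.
Proof.
split => h n hn.
  by rewrite ksubE h // subrr.
by apply/eqP; rewrite -subr_eq0 -ksubE h.
Qed.

Definition kcont (f : O -> K) := forall (x : O) (l : int), exists k : nat,
  forall y : O, agr (oval y) (oval x) k%:Z -> agr (f y) (f x) l.

Lemma kcontinuousP f : kcontinuous f <-> kcont f.
Proof.
split.
  move=> hf x l.
  have [d hd hd'] := hf x (qR ^ (- (l - 1))) (qpow_gt0 _).
  have [k hk] := small_exists d hd.
  exists k => y hy; apply/agr_sub.
  have := hd' y; move/agr_sub: hy => /absK_vge hy /(_ (le_lt_trans hy hk)) /absK_lt.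
  by have -> : l - 1 + 1 = l by lia.
move=> hf x e he.
have [l hl] := small_exists e he.
have [k hk] := hf x l%:Z.
exists (qR ^ (- (k%:Z - 1))); first exact: qpow_gt0.
move=> y /absK_lt hy.
have e1 : k%:Z - 1 + 1 = k%:Z by lia.
rewrite e1 in hy.
apply: le_lt_trans hl; apply: absK_vge; apply/agr_sub; apply: hk; exact/agr_sub.
Qed.

Definition oz : O := @MkO F (kzero F) (fun n _ => erefl).

Definition kbounded (g : O -> K) := exists B : R, forall x : O, absK (g x) <= B.

Lemma supnorm_le (g : O -> K) B : (forall x : O, absK (g x) <= B) -> supnorm g <= B.
Proof.
move=> h; apply: ge_sup; first by exists (absK (g oz)), oz.
by move=> r [x _ <-].
Qed.

Lemma supnorm_ge (g : O -> K) (x : O) : kbounded g -> absK (g x) <= supnorm g.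
Proof.
move=> [B hB]; apply: sup_upper_bound; last by exists x.
split; first by exists (absK (g oz)), oz.
by exists B => r [y _ <-].
Qed.

Lemma supnorm_eq (g : O -> K) B (x0 : O) : (forall x : O, absK (g x) <= B) -> absK (g x0) = B ->
  supnorm g = B.
Proof.
move=> h e; apply: le_anti; rewrite supnorm_le //= -{1}e supnorm_ge //.
by exists B.
Qed.

End Abs.


Section Compact.
Context {F : finFieldType}.
Local Notation K := (K F).
Local Notation O := (O F).
Implicit Types (l L : int).

Definition dig (x : O) (i : nat) : F := kcoef (oval x) i%:Z.

Definition dcoef (d : nat -> F) (n : int) : F :=
  match n with Posz k => d k | Negz _ => 0 end.
Lemma dcoef_bnd d : lbounded (dcoef d).
Proof. by exists 0; case. Qed.
Definition ofd (d : nat -> F) : O := @MkO F (MkK (dcoef_bnd d)) (fun n => match n with Posz k => fun h => False_ind _ (notF h) | Negz _ => fun _ => erefl end).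

Lemma dig_ofd d i : dig (ofd d) i = d i. Proof. by []. Qed.

Lemma oneg (x : O) n : n < 0 -> kcoef (oval x) n = 0.
Proof. exact: oint. Qed.

Lemma agr_dig (x y : O) (k : nat) : agr (oval x) (oval y) k%:Z <-> forall i, (i < k)%N -> dig x i = dig y i.
Proof.
split => h.
  by move=> i hi; apply: h; rewrite ltz_nat.
case=> [i|i] hi; last by rewrite !oneg.
by apply: h; rewrite -ltz_nat.
Qed.

Lemma O_vge (x : O) : vge (oval x) 0.
Proof. by move=> n hn; apply: oneg. Qed.

Definition pre (s : seq F) (x : O) := forall i, (i < size s)%N -> dig x i = nth 0 s i.

Section Unif.
Variable f : O -> K.
Hypothesis hf : kcont f.
Variable l : int.

Definition Bad (s : seq F) := forall k : nat, exists x y : O, [/\ pre s x, pre s y,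
  agr (oval x) (oval y) k%:Z & ~ agr (f x) (f y) l].

Lemma Bad_step s : Bad s -> exists c, Bad (rcons s c).
Proof.
move=> hb; apply: NNPP => hn.
have hc : forall c, exists k : nat, forall x y : O, pre (rcons s c) x -> pre (rcons s c) y ->
    agr (oval x) (oval y) k%:Z -> agr (f x) (f y) l.
  move=> c; apply: NNPP => hk; apply: hn; exists c => k.
  apply: NNPP => hk2; apply: hk; exists k => x y h1 h2 h3; apply: NNPP => h4.
  by apply: hk2; exists x, y.
pose kc c := proj1_sig (constructive_indefinite_description _ (hc c)).
have hkc c : forall x y : O, pre (rcons s c) x -> pre (rcons s c) y ->
    agr (oval x) (oval y) (kc c)%:Z -> agr (f x) (f y) l.
  by rewrite /kc; case: constructive_indefinite_description.
set M := maxn (size s).+1 (\max_(c : F) kc c).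
have [x [y [h1 h2 h3 h4]]] := hb M.
apply: h4; apply: (hkc (dig x (size s))).
- move=> i; rewrite size_rcons ltnS leq_eqVlt => /orP[/eqP ->|hi].
    by rewrite nth_rcons ltnn eqxx.
  by rewrite nth_rcons hi h1.
- move=> i; rewrite size_rcons ltnS leq_eqVlt => /orP[/eqP ->|hi].
    rewrite nth_rcons ltnn eqxx; symmetry; apply/(agr_dig x y M).1 => //.
    by rewrite /M leq_max ltnSn.
  by rewrite nth_rcons hi h2.
- apply: agrW h3; rewrite lez_nat /M leq_max; apply/orP; right.
  exact: (leq_bigmax_cond (dig x (size s))).
Qed.

Definition stepc (s : {s : seq F | Bad s}) : {s' : seq F | Bad s'} :=
  let e := constructive_indefinite_description _ (Bad_step _ (proj2_sig s)) in
  exist _ (rcons (proj1_sig s) (proj1_sig e)) (proj2_sig e).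

Hypothesis hbad0 : Bad [::].

Fixpoint path (n : nat) : {s : seq F | Bad s} :=
  match n with 0 => exist _ [::] hbad0 | n'.+1 => stepc (path n') end.

Lemma path_size n : size (proj1_sig (path n)) = n.
Proof. by elim: n => //= n IH; rewrite size_rcons IH. Qed.

Definition dstar (i : nat) : F := nth 0 (proj1_sig (path i.+1)) i.

Lemma path_pre n i : (i < n)%N -> nth 0 (proj1_sig (path n)) i = dstar i.
Proof.
elim: n => // n IH; rewrite ltnS leq_eqVlt => /orP[/eqP ->|hi] //.
by rewrite /= nth_rcons path_size hi IH.
Qed.

Lemma unif_contra : False.
Proof.
have [k0 hk0] := hf (ofd dstar) l.
have [x [y [h1 h2 _ h4]]] := proj2_sig (path k0) 0%N.
apply: h4.
have ex : forall z : O, pre (proj1_sig (path k0)) z -> agr (f z) (f (ofd dstar)) l.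
  move=> z hz; apply: hk0; apply/agr_dig => i hi.
  by rewrite dig_ofd hz ?path_size // path_pre.
exact: agr_trans (ex x h1) (agr_sym _ _ _ (ex y h2)).
Qed.

End Unif.

Lemma unif (f : O -> K) : kcont f -> forall l, exists k : nat, forall x y : O,
  agr (oval x) (oval y) k%:Z -> agr (f x) (f y) l.
Proof.
move=> hf l; apply: NNPP => hn.
apply: (unif_contra f hf l) => k.
apply: NNPP => hk; apply: hn; exists k => x y h; apply: NNPP => h2.
by apply: hk; exists x, y; split => // i; rewrite /= ltn0.
Qed.

Definition ttup (k : nat) (t : k.-tuple F) : O := ofd (fun i => nth 0 t i).

Lemma kcont_vge (f : O -> K) : kcont f -> exists L, L <= 0 /\ forall x, vge (f x) L.
Proof.
move=> hf; have [k hk] := unif f hf 0.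
exists (\big[Num.min/0]_(t : k.-tuple F) klb (f (ttup k t))); split.
  by elim/big_rec: _ => // i a _ ha; rewrite ge_min ha orbT.
move=> x n hn.
set t := [tuple dig x i | i < k].
have ha : agr (oval x) (oval (ttup k t)) k%:Z.
  apply/agr_dig => i hi; rewrite dig_ofd /t.
  by rewrite -[i]/(nat_of_ord (Ordinal hi)) -tnth_nth tnth_mktuple.
have hn0 : n < 0.
  apply: lt_le_trans hn _.
  by elim/big_rec: _ => // i a _ ha'; rewrite ge_min ha' orbT.
rewrite (hk x (ttup k t) ha n hn0); apply: vge_klb.
apply: lt_le_trans hn _.
by rewrite (bigD1 t) //= ge_min lexx.
Qed.

Lemma kcont_bounded (f : O -> K) : kcont f -> kbounded f.
Proof.
move=> hf; have [L [_ hL]] := kcont_vge f hf.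
by exists (@qR F ^ (- L)) => x; apply: absK_vge.
Qed.

Lemma kcont_const (c : K) : kcont (fun _ => c).
Proof. by move=> x l; exists 0%N. Qed.

Lemma kcont_oval : kcont (@oval F).
Proof. by move=> x l; exists `|l|%N => y h; apply: agrW h; lia. Qed.

Lemma kcont_bin (f g : O -> K) (op : K -> K -> K) :
  (forall a b a' b' l, agr a a' l -> agr b b' l -> agr (op a b) (op a' b') l) ->
  kcont f -> kcont g -> kcont (fun x => op (f x) (g x)).
Proof.
move=> hop hf hg x l.
have [k1 h1] := hf x l; have [k2 h2] := hg x l.
exists (maxn k1 k2) => y hy; apply: hop.
  by apply: h1; apply: agrW hy; rewrite lez_nat leq_maxl.
by apply: h2; apply: agrW hy; rewrite lez_nat leq_maxr.
Qed.

Lemma kcont_add (f g : O -> K) : kcont f -> kcont g -> kcont (fun x => kadd (f x) (g x)).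
Proof.
apply: kcont_bin => a b a' b' l h1 h2 n hn.
by rewrite !kaddE h1 ?h2.
Qed.

Lemma kcont_sub (f g : O -> K) : kcont f -> kcont g -> kcont (fun x => ksub (f x) (g x)).
Proof.
apply: kcont_bin => a b a' b' l h1 h2 n hn.
by rewrite !ksubE h1 ?h2.
Qed.

Lemma kcont_ksum (T : Type) (g : T -> O -> K) (r : seq T) :
  (forall i, kcont (g i)) -> kcont (fun x => ksum [seq g i x | i <- r]).
Proof.
move=> hg; elim: r => [|i r IH]; first exact: kcont_const.
exact: kcont_add.
Qed.

Lemma kcont_mulc (c : K) (g : O -> K) : kcont g -> kcont (fun x => kmul c (g x)).
Proof.
move=> hg x l.
have [k hk] := hg x (l - klb c).
exists k => y hy.
set Ly := Num.min (l - klb c) (klb (g x)).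
have h1 : vge (g x) Ly by apply: vgeW (vge_klb _); rewrite ge_min lexx orbT.
have h2 : vge (g y) Ly.
  move=> n hn; rewrite (hk y hy n); first exact: h1.
  by apply: lt_le_trans hn _; rewrite ge_min lexx.
have := kmul_agr c c (g y) (g x) (klb c) Ly (l - Ly) (l - klb c) (vge_klb c) (vge_klb c) h2 h1
  (agr_refl _ _) (hk y hy).
by have -> : Num.min (l - Ly + Ly) (l - klb c + klb c) = l by rewrite !subrK minxx.
Qed.

Lemma kcont_mul0 (f g : O -> K) : kcont f -> kcont g -> (forall x, vge (f x) 0) ->
  (forall x, vge (g x) 0) -> kcont (fun x => kmul (f x) (g x)).
Proof.
move=> hf hg hf0 hg0 x l.
have [k1 h1] := hf x l; have [k2 h2] := hg x l.
exists (maxn k1 k2) => y hy; apply: kmul_agr0 => //.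
  by apply: h1; apply: agrW hy; rewrite lez_nat leq_maxl.
by apply: h2; apply: agrW hy; rewrite lez_nat leq_maxr.
Qed.

Lemma kcont_psum (b : nat -> O -> K) (a : nat -> K) N : (forall n, kcont (b n)) ->
  kcont (psum b a N).
Proof.
move=> hb; rewrite /psum.
apply: (kcont_ksum nat (fun n x => kmul (a n) (b n x))) => n.
exact: kcont_mulc.
Qed.

End Compact.


Section Mono.
Context {F : finFieldType}.
Local Notation q := (qq F).

Lemma q_gt0 : (0 < q)%N.
Proof. exact: ltn_trans qq_gt1. Qed.

Definition mono (S j : nat) (d : nat -> F) : F := \prod_(n < S) d n ^+ digit F j n.

Lemma digit0 j n : (j < q ^ n)%N -> digit F j n = 0%N.
Proof. by move=> h; rewrite /digit divn_small // mod0n. Qed.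

Lemma mono_ext S S' j d : (S <= S')%N -> (j < q ^ S)%N -> mono S' j d = mono S j d.
Proof.
move=> hS hj; rewrite /mono -(subnKC hS).
rewrite big_split_ord /=.
rewrite [X in _ * X]big1 ?mulr1 // => i _.
by rewrite digit0 ?expr0 //; apply: leq_trans hj _; rewrite leq_pexp2l ?q_gt0 // leq_addr.
Qed.

Lemma digit_cons0 a j' : (a < q)%N -> digit F (a + q * j') 0 = a.
Proof. by move=> ha; rewrite /digit expn0 divn1 addnC mulnC modnMDl modn_small. Qed.

Lemma digit_consS a j' n : (a < q)%N -> digit F (a + q * j') n.+1 = digit F j' n.
Proof.
move=> ha; have e : ((a + q * j') %/ q = j')%N.
  by rewrite addnC mulnC divnMDl ?q_gt0 // divn_small // addn0.
by rewrite /digit expnS divnMA e.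
Qed.

Lemma mono_cons N a j' d : (a < q)%N ->
  mono N.+1 (a + q * j') d = d 0%N ^+ a * mono N j' (fun i => d i.+1).
Proof.
move=> ha; rewrite /mono big_ord_recl /= digit_cons0 //; congr (_ * _).
by apply: eq_bigr => i _; rewrite digit_consS.
Qed.

Lemma sum_split (g : nat -> F) M :
  \sum_(j < q * M) g j = \sum_(a < q) \sum_(j' < M) g (a + q * j')%N.
Proof.
elim: M => [|M IH].
  by rewrite muln0 big_ord0 big1 // => a _; rewrite big_ord0.
rewrite mulnSr big_split_ord /= IH.
rewrite [RHS](eq_bigr (fun a : 'I_q => \sum_(j' < M) g (a + q * j')%N + g (a + q * M)%N)); last first.
  by move=> a _; rewrite big_ord_recr.
by rewrite big_split /=; congr (_ + _); apply: eq_bigr => a _; rewrite addnC.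
Qed.

Lemma pow_q1 (x : F) : x ^+ q.-1 = if x == 0 then 0 else 1.
Proof.
have hq : q = q.-1.+1 by rewrite prednK // q_gt0.
case: eqP => [->|/eqP hx].
  by rewrite expr0n; case: (q.-1) hq => // h; have := qq_gt1 (F:=F); rewrite h.
apply: (mulfI hx); rewrite -exprS -hq mulr1.
exact: expf_card.
Qed.

Definition consd (x : F) (e : nat -> F) : nat -> F := fun i => if i is i'.+1 then e i' else x.

Lemma mono_indep N (c : nat -> F) : (forall d, \sum_(j < q ^ N) c j * mono N j d = 0) ->
  forall j, (j < q ^ N)%N -> c j = 0.
Proof.
elim: N c => [|N IH] c h j hj.
  have := h (fun _ => 0); rewrite expn0 big_ord1 /mono big_ord0 mulr1.
  by move: hj; rewrite expn0 ltnS leqn0 => /eqP ->.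
have hC : forall e (a : nat), (a < q)%N -> \sum_(j' < q ^ N) c (a + q * j')%N * mono N j' e = 0.
  move=> e a ha.
  pose Ca (a : nat) := \sum_(j' < q ^ N) c (a + q * j')%N * mono N j' e.
  pose P := \poly_(a < q) Ca a.
  have hP : P = 0.
    apply: contraTeq isT => hP0.
    have := max_poly_roots hP0 (rs := enum F).
    rewrite enum_uniq => /(_ _ isT).
    have -> : all (root P) (enum F).
      apply/allP => x _; apply/rootP.
      rewrite horner_poly.
      have := h (consd x e); rewrite [(q ^ N.+1)%N]expnS (sum_split (fun j => c j * mono N.+1 j (consd x e))) => hx; apply: (etrans _ hx).
      apply: eq_bigr => a' _; rewrite /Ca mulr_suml; apply: eq_bigr => j' _.
      by rewrite mono_cons //= -mulrA [_ * x ^+ _]mulrC.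
    have hle : (size P <= #|F|)%N := size_poly q Ca.
    by move=> /(_ isT); rewrite -cardE ltnNge hle.
  have := coef_poly q Ca a; rewrite -/P hP coef0 ha => e0; exact: esym e0.
have hj2 : (j %/ q < q ^ N)%N by rewrite ltn_divLR ?q_gt0 // -expnSr.
have hm : (j %% q < q)%N by rewrite ltn_mod q_gt0.
rewrite (divn_eq j q) addnC mulnC.
apply: (IH (fun j' => c (j %% q + q * j')%N)) => // d.
exact: hC.
Qed.

Definition Lag (x : F) : {poly F} := 1 - ('X - x%:P) ^+ q.-1.

Lemma Lag_size x : (size (Lag x) <= q)%N.
Proof.
rewrite /Lag; apply: leq_trans (size_polyD _ _) _.
rewrite size_polyN size_exp_XsubC prednK ?q_gt0 // geq_max size_poly1 q_gt0 leqnn.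
by [].
Qed.

Lemma Lag_eval x y : (Lag x).[y] = if y == x then 1 else 0.
Proof.
rewrite /Lag !hornerE pow_q1 subr_eq0.
by case: eqP => _; rewrite ?subr0 ?subrr.
Qed.

Lemma mono_span N (h : (nat -> F) -> F) :
  (forall d d', (forall i, (i < N)%N -> d i = d' i) -> h d = h d') ->
  exists c : nat -> F, forall d, h d = \sum_(j < q ^ N) c j * mono N j d.
Proof.
elim: N h => [|N IH] h hh.
  exists (fun _ => h (fun _ => 0)) => d.
  by rewrite expn0 big_ord1 /mono big_ord0 mulr1; apply: hh.
have hg : forall x : F, exists g : nat -> F, forall e,
    h (consd x e) = \sum_(j < q ^ N) g j * mono N j e.
  move=> x; apply: IH => e e' he; apply: hh => -[|i] hi //=.
  exact: he.
pose g x := proj1_sig (constructive_indefinite_description _ (hg x)).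
have hgx : forall x e, h (consd x e) = \sum_(j < q ^ N) g x j * mono N j e.
  by move=> x; rewrite /g; case: constructive_indefinite_description.
exists (fun j => \sum_(x : F) (Lag x)`_(j %% q)%N * g x (j %/ q)%N) => d.
set e := fun i => d i.+1.
have hd : h d = \sum_(x : F) (Lag x).[d 0%N] * h (consd x e).
  rewrite (bigD1 (d 0%N)) //= Lag_eval eqxx mul1r big1 ?addr0.
    by apply: hh => -[|i] hi.
  by move=> x hx; rewrite Lag_eval eq_sym (negbTE hx) mul0r.
rewrite hd expnS (sum_split (fun j => (\sum_(x : F) (Lag x)`_(j %% q)%N * g x (j %/ q)%N) * mono N.+1 j d)).
rewrite (eq_bigr (fun x => \sum_(a < q) \sum_(j' < q ^ N)
    ((Lag x)`_a * d 0%N ^+ a) * (g x j' * mono N j' e))); last first.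
  move=> x _; rewrite (horner_coef_wide _ (Lag_size x)) hgx mulr_suml.
  by apply: eq_bigr => a _; rewrite mulr_sumr.
rewrite exchange_big /=; apply: eq_bigr => a _.
rewrite exchange_big /=; apply: eq_bigr => j' _.
rewrite mono_cons // addnC mulnC modnMDl modn_small // divnMDl ?q_gt0 // divn_small // addn0.
rewrite mulr_suml; apply: eq_bigr => x _; rewrite -/e; ring.
Qed.

Definition M (j : nat) (d : nat -> F) : F := mono j.+1 j d.

Lemma j_lt_qj j : (j < q ^ j.+1)%N.
Proof. apply: ltn_trans (ltnSn j) _; exact: ltn_expl qq_gt1. Qed.

Lemma M_mono S j d : (j < q ^ S)%N -> M j d = mono S j d.
Proof.
move=> h; rewrite /M; case: (leqP S j.+1) => hS.
  by rewrite (mono_ext S j.+1).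
by rewrite (mono_ext j.+1 S) // ?j_lt_qj // ltnW.
Qed.

Lemma M_indep B (c : nat -> F) : (forall d, \sum_(j < B) c j * M j d = 0) ->
  forall j, (j < B)%N -> c j = 0.
Proof.
move=> h j hj.
have hB : (B < q ^ B)%N by exact: ltn_expl qq_gt1.
pose c' k := if (k < B)%N then c k else 0.
have H : forall d, \sum_(j < q ^ B) c' j * mono B j d = 0.
  move=> d; rewrite -(subnKC (ltnW hB)) big_split_ord /= [X in _ + X]big1 ?addr0.
    apply: etrans (h d); apply: eq_bigr => i _; rewrite /c' ltn_ord (M_mono B) //.
    exact: ltn_trans (ltn_ord i) hB.
  by move=> i _; rewrite /c' ltnNge leq_addr mul0r.
have := mono_indep B c' H j (ltn_trans hj hB).
by rewrite /c' hj.
Qed.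

Lemma M_span N (h : (nat -> F) -> F) :
  (forall d d', (forall i, (i < N)%N -> d i = d' i) -> h d = h d') ->
  exists c : nat -> F, forall d, h d = \sum_(j < q ^ N) c j * M j d.
Proof.
move=> hh; have [c hc] := mono_span N h hh.
exists c => d; rewrite hc; apply: eq_bigr => j _; rewrite (M_mono N) //.
Qed.

End Mono.


Section ONB.
Context {F : finFieldType}.
Local Notation K := (K F).
Local Notation O := (O F).
Local Notation q := (qq F).
Implicit Types (l L : int).

Variable b : nat -> O -> K.
Hypothesis hb_cont : forall n, kcont (b n).
Hypothesis hb_O : forall n x, vge (b n x) 0.
Hypothesis hb_red : forall n x, kcoef (b n x) 0 = M n (dig x).

Definition vexp (f : O -> K) (a : nat -> K) :=
  (forall l, exists N0 : nat, forall n, (N0 <= n)%N -> vge (a n) l) /\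
  (forall l, exists N0 : nat, forall N, (N0 <= N)%N -> forall x, agr (f x) (psum b a N x) l).

Lemma psumE (a : nat -> K) N x i :
  kcoef (psum b a N x) i = \sum_(n < N) kcoef (kmul (a n) (b n x)) i.
Proof.
rewrite /psum ksumE big_map.
have -> : iota 0 N = index_iota 0 N by rewrite /index_iota subn0.
by rewrite big_mkord.
Qed.

Lemma expansionP (f : O -> K) (a : nat -> K) : kcont f -> (expansion b f a <-> vexp f a).
Proof.
move=> hf.
have hbd : forall N, kbounded (fun x => ksub (f x) (psum b a N x)).
  by move=> N; apply: kcont_bounded; apply: kcont_sub => //; apply: kcont_psum.
split.
  move=> [hc hu]; split.
    move=> l; have [N0 hN0] := hc _ (@qpow_gt0 F (- (l - 1))).
    exists N0 => n hn; have := absK_lt _ _ (hN0 n hn).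
    by have -> : l - 1 + 1 = l by lia.
  move=> l; have [N0 hN0] := hu _ (@qpow_gt0 F (- (l - 1))).
  exists N0 => N hN x; apply/agr_sub.
  have := le_lt_trans (supnorm_ge _ x (hbd N)) (hN0 N hN) => /absK_lt.
  by have -> : l - 1 + 1 = l by lia.
move=> [hc hu]; split.
  move=> e he; have [l hl] := @small_exists F e he.
  have [N0 hN0] := hc l%:Z; exists N0 => n hn.
  exact: le_lt_trans (absK_vge _ _ (hN0 n hn)) hl.
move=> e he; have [l hl] := @small_exists F e he.
have [N0 hN0] := hu l%:Z; exists N0 => N hN.
apply: le_lt_trans hl; apply: supnorm_le => x.
by apply: absK_vge; apply/agr_sub; apply: hN0.
Qed.

Lemma vexp_norm (f : O -> K) (a : nat -> K) : vexp f a ->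
  (exists n, supnorm f = absK (a n)) /\ (forall n, absK (a n) <= supnorm f).
Proof.
move=> [hc hu].
case: (classic (exists n i, kcoef (a n) i != 0)) => [[n0 [i0 hn0]]|hz]; last first.
  have hz' : forall n i, kcoef (a n) i = 0.
    by move=> n i; apply/eqP; apply: contraT => h; exfalso; apply: hz; exists n, i.
  have hf0 : forall x i, kcoef (f x) i = 0.
    move=> x i; have [N0 hN0] := hu (i + 1).
    rewrite (hN0 N0 (leqnn _) x i); last by lia.
    rewrite psumE big1 // => n _; exact: kmul_zero.
  have e0 : supnorm f = 0.
    apply: (supnorm_eq _ 0 (oz)); last exact: absK_zero.
    by move=> x; rewrite absK_zero.
  split; first by exists 0%N; rewrite e0 absK_zero.
  by move=> n; rewrite e0 absK_zero.
have := kval_spec (a n0); case E0: (kval (a n0)) => [v0|] ; last by move=> h; move: hn0; rewrite h eqxx.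
move=> [hv0 hnz0].
have [N hN] := hc (v0 + 1).
have hn0N : (n0 < N)%N.
  rewrite ltnNge; apply/negP => h; move: hnz0; rewrite hN // ?eqxx //; lia.
pose val' n := if kval (a n) is Some v then v else v0.
pose v := \big[Num.min/v0]_(n < N) val' n.
have hvv0 : v <= v0 by rewrite /v; elim/big_rec: _ => // i y _ hy; rewrite ge_min hy orbT.
have hval : forall n, vge (a n) (val' n).
  move=> n; rewrite /val'; have := kval_spec (a n); case: kval => [w [hw _]|h] //; by move=> i _; apply: h.
have hvge : forall n, vge (a n) v.
  move=> n; case: (ltnP n N) => h.
    apply: vgeW (hval n); rewrite /v (bigD1 (Ordinal h)) //= ge_min lexx //.
  by apply: vgeW (hN n h); lia.
have [n1 hn1] : exists n1, kval (a n1) = Some v.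
  have : v = v0 \/ exists n : 'I_N, v = val' n.
    rewrite /v; elim/big_rec: _ => [|i y _ [->|[n ->]]]; first by left.
      by rewrite /Num.min; case: ifP => _; [right; exists i | left].
    by rewrite /Num.min; case: ifP => _; right; [exists i | exists n].
  case=> [->|[n ->]]; first by exists n0.
  rewrite /val'; case E: (kval (a n)) => [w|]; first by exists n.
  by exists n0.
have := kval_spec (a n1); rewrite hn1 => -[hv1 hnz1].
have [N1 hN1] := hu (v + 1).
set N' := maxn N1 n1.+1.
have hfx : forall x, vge (f x) v /\
    kcoef (f x) v = \sum_(n < N') kcoef (a n) v * M n (dig x).
  move=> x; have ha := hN1 N' (leq_maxl _ _) x.
  split.
    move=> i hi; rewrite ha; last by lia.
    rewrite psumE big1 // => n _.
    by apply: (kmul_vge _ _ v 0 (hvge n) (hb_O n x)); rewrite addr0.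
  rewrite ha; last by lia.
  rewrite psumE; apply: eq_bigr => n _.
  by have := kmul_lead _ _ v 0 (hvge n) (hb_O n x); rewrite addr0 hb_red.
have [d hd] : exists d, \sum_(n < N') kcoef (a n) v * M n d != 0.
  apply: NNPP => hnd.
  have := M_indep N' (fun n => kcoef (a n) v).
  have H : forall d, \sum_(n < N') kcoef (a n) v * M n d = 0.
    by move=> d; apply/eqP; apply: contraT => h; exfalso; apply: hnd; exists d.
  have hn1N : (n1 < N')%N by rewrite /N' leq_max ltnSn orbT.
  move=> /(_ H n1 hn1N) e.
  by move: hnz1; rewrite e eqxx.
have [hd1 hd2] := hfx (ofd d).
have hsup : supnorm f = @qR F ^ (- v).
  apply: (supnorm_eq f (@qR F ^ (- v)) (ofd d)).
    by move=> x; apply: absK_vge; case: (hfx x).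
  by apply: absK_eq => //; rewrite hd2.
split; first by exists n1; rewrite hsup /absK hn1.
by move=> n; rewrite hsup; apply: absK_vge.
Qed.


Lemma kzero_sup : supnorm (fun _ : O => kzero F) = 0.
Proof.
apply: (supnorm_eq _ 0 oz); last exact: absK_zero.
by move=> x; rewrite absK_zero.
Qed.

Lemma vexp_unique (f : O -> K) (a a' : nat -> K) : vexp f a -> vexp f a' -> a = a'.
Proof.
move=> [hc hu] [hc' hu'].
pose a'' n := ksub (a n) (a' n).
have hlin : forall n y Ly i, vge y Ly -> kcoef (kmul (a'' n) y) i =
    kcoef (kmul (a n) y) i - kcoef (kmul (a' n) y) i.
  move=> n y Ly i hy.
  set Lm := Num.min (klb (a n)) (klb (a' n)).
  have h1 : vge (a n) Lm by apply: vgeW (vge_klb _); rewrite ge_min lexx.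
  have h2 : vge (a' n) Lm by apply: vgeW (vge_klb _); rewrite ge_min lexx orbT.
  have h3 : vge (a'' n) Lm by move=> j hj; rewrite ksubE h1 ?h2 ?subrr.
  rewrite (kmul_lin (a'' n) (a' n) (a n) y Lm Ly i h3 h2 h1 hy); first by rewrite addrK.
  by move=> j; rewrite ksubE subrK.
have hz : vexp (fun _ => kzero F) a''.
  split.
    move=> l; have [N1 h1] := hc l; have [N2 h2] := hc' l.
    exists (maxn N1 N2) => n hn j hj; rewrite ksubE h1 ?h2 ?subrr //.
      by apply: leq_trans hn; rewrite leq_maxr.
    by apply: leq_trans hn; rewrite leq_maxl.
  move=> l; have [N1 h1] := hu l; have [N2 h2] := hu' l.
  exists (maxn N1 N2) => N hN x j hj.
  have e1 := h1 N (leq_trans (leq_maxl _ _) hN) x j hj.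
  have e2 := h2 N (leq_trans (leq_maxr _ _) hN) x j hj.
  rewrite kzeroE psumE.
  rewrite (eq_bigr (fun n : 'I_N => kcoef (kmul (a n) (b n x)) j - kcoef (kmul (a' n) (b n x)) j)).
    by rewrite sumrB -!psumE -e1 -e2 subrr.
  by move=> n _; apply: (hlin n (b n x) 0); apply: hb_O.
have [_ hn] := vexp_norm _ _ hz.
rewrite kzero_sup in hn.
apply: functional_extensionality => n; apply: keq => i.
have h0 : absK (a'' n) = 0 by apply: le_anti; rewrite hn absK_ge0.
have := absK_eq0 _ h0 i; rewrite ksubE => /eqP; rewrite subr_eq0 => /eqP.
done.
Qed.

Lemma psum_ext (A : nat -> K) B N x i : (B <= N)%N ->
  (forall n, (B <= n)%N -> forall j, kcoef (A n) j = 0) ->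
  kcoef (psum b A N x) i = kcoef (psum b A B x) i.
Proof.
move=> hBN hA; rewrite !psumE -(subnKC hBN) big_split_ord /= [X in _ + X]big1 ?addr0 //.
move=> n _; apply: kmul_zero => j; apply: hA; exact: leq_addr.
Qed.

Definition mon_coef (l : int) (c : F) (i : int) : F := if i == l then c else 0.
Lemma mon_bnd l c : lbounded (mon_coef l c).
Proof. by exists l => i hi; rewrite /mon_coef (lt_eqF hi). Qed.
Definition mon l c : K := MkK (mon_bnd l c).

Section Exist.
Variable f : O -> K.
Hypothesis hf : kcont f.
Variable L : int.
Hypothesis hL : forall x, vge (f x) L.

Definition Inv (t : nat) (A : nat -> K) (B : nat) :=
  [/\ (forall n, (B <= n)%N -> forall i, kcoef (A n) i = 0), (forall n, vge (A n) L) &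
      (forall x, agr (f x) (psum b A B x) (L + t%:Z))].

Lemma Inv_step t A B : Inv t A B -> exists p : (nat -> K) * nat,
  Inv t.+1 p.1 p.2 /\ (forall n, agr (p.1 n) (A n) (L + t%:Z)).
Proof.
case=> h1 h2 h3.
have hLl : L <= L + t%:Z by lia.
set l := L + t%:Z.
pose r x := ksub (f x) (psum b A B x).
have hr : kcont r by apply: kcont_sub => //; apply: kcont_psum.
have [k hk] := unif r hr (l + 1).
pose hd d := kcoef (r (ofd d)) l.
have hhd : forall d d', (forall i, (i < k)%N -> d i = d' i) -> hd d = hd d'.
  move=> d d' hdd; rewrite /hd; apply: (hk (ofd d) (ofd d')); last by lia.
  by apply/agr_dig => i hi; rewrite !dig_ofd hdd.
have [c hc] := M_span k hd hhd.
have hrx : forall x, kcoef (r x) l = \sum_(j < q ^ k) c j * M j (dig x).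
  move=> x; rewrite -(hc (dig x)) /hd; apply: (hk x (ofd (dig x))); last by lia.
  by apply/agr_dig => i hi; rewrite dig_ofd.
pose D n := mon l (if (n < q ^ k)%N then c n else 0).
have hD : forall n, vge (D n) l.
  by move=> n i hi; rewrite /= /mon_coef (lt_eqF hi).
have hDL : forall n, vge (D n) L by move=> n; apply: vgeW (hD n).
pose A' n := kadd (A n) (D n).
have hA'L : forall n, vge (A' n) L by move=> n i hi; rewrite kaddE h2 ?hDL ?addr0.
exists (A', maxn B (q ^ k)); split; last first.
  move=> n i hi; change (kcoef (A n) i + kcoef (D n) i = kcoef (A n) i).
  by rewrite hD // addr0.
split => /=.
- move=> n hn i; change (kcoef (A n) i + kcoef (D n) i = 0).
  rewrite h1; last by apply: leq_trans hn; rewrite leq_maxl.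
  rewrite add0r /= /mon_coef; case: ifP => // _.
  by rewrite ltnNge (leq_trans (leq_maxr _ _) hn).
- exact: hA'L.
have -> : L + (t.+1)%:Z = l + 1 by rewrite /l; lia.
move=> x i hi.
have key : forall n, kcoef (kmul (A' n) (b n x)) i =
    kcoef (kmul (A n) (b n x)) i + kcoef (kmul (D n) (b n x)) i.
  move=> n; apply: (kmul_lin (A n) (D n) (A' n) (b n x) L 0 i (h2 n) (hDL n) (hA'L n) (hb_O n x)).
  by move=> j; rewrite kaddE.
rewrite psumE (eq_bigr (fun n : 'I_(maxn B (q ^ k)) => kcoef (kmul (A n) (b n x)) i + kcoef (kmul (D n) (b n x)) i)); last by move=> n _; apply: key.
rewrite big_split /= -(psumE A).
rewrite (psum_ext A B) ?leq_maxl //.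
case: (ltrP i l) => hil.
  rewrite big1 ?addr0; first exact: h3.
  move=> n _; apply: (kmul_vge (D n) (b n x) l 0 (hD n) (hb_O n x)); lia.
have ei : i = l by lia.
subst i.
rewrite (eq_bigr (fun n : 'I_(maxn B (q ^ k)) => (if (n < q ^ k)%N then c n else 0) * M n (dig x))); last first.
  move=> n _; have := kmul_lead (D n) (b n x) l 0 (hD n) (hb_O n x).
  by rewrite addr0 hb_red /= /mon_coef eqxx.
have hqk : (q ^ k <= maxn B (q ^ k))%N by rewrite leq_maxr.
have eS : \sum_(n < maxn B (q ^ k)) (if (n < q ^ k)%N then c n else 0) * M n (dig x) =
    \sum_(n < q ^ k) c n * M n (dig x).
  rewrite -(subnKC hqk) big_split_ord /= [X in _ + X]big1; last first.
    by move=> n _; rewrite ltnNge leq_addr mul0r.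
  by rewrite addr0; apply: eq_bigr => n _; rewrite ltn_ord.
rewrite eS.
by rewrite -hrx ksubE addrC subrK.
Qed.

Lemma Inv0 : Inv 0 (fun _ => kzero F) 0.
Proof.
split => //.
by move=> x i hi; rewrite /psum /= hL //; lia.
Qed.

Fixpoint stage (t : nat) : {p : (nat -> K) * nat | Inv t p.1 p.2} :=
  match t with
  | 0 => exist _ (fun _ => kzero F, 0%N) Inv0
  | t'.+1 => let s := stage t' in
      let e := constructive_indefinite_description _
        (Inv_step t' (proj1_sig s).1 (proj1_sig s).2 (proj2_sig s)) in
      exist _ (proj1_sig e) (proj1 (proj2_sig e))
  end.

Definition As (t : nat) := (proj1_sig (stage t)).1.
Definition Bs (t : nat) := (proj1_sig (stage t)).2.

Lemma As_inv t : Inv t (As t) (Bs t).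
Proof. exact: proj2_sig (stage t). Qed.

Lemma As_step t n : agr (As t.+1 n) (As t n) (L + t%:Z).
Proof.
rewrite /As /=; case: constructive_indefinite_description => p [_ hp] /=; exact: hp.
Qed.

Lemma As_chain s t n : (s <= t)%N -> agr (As t n) (As s n) (L + s%:Z).
Proof.
elim: t => [|t IH]; first by rewrite leqn0 => /eqP ->.
rewrite leq_eqVlt => /orP[/eqP <- //|hs].
apply: (agr_trans _ (As t n)); last exact: IH.
apply: agrW (As_step t n); lia.
Qed.

Definition tt (i : int) : nat := (absz (i - L)%R).+1.

Definition acoef (n : nat) (i : int) : F := kcoef (As (tt i) n) i.
Lemma abnd n : lbounded (acoef n).
Proof.
exists L => i hi; rewrite /acoef.
by case: (As_inv (tt i)) => _ h _; apply: h.
Qed.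
Definition alim (n : nat) : K := MkK (abnd n).

Lemma alim_agr t n : agr (alim n) (As t n) (L + t%:Z).
Proof.
move=> i hi; rewrite /= /acoef.
case: (ltrP i L) => hiL.
  by case: (As_inv (tt i)) => _ h _; case: (As_inv t) => _ h' _; rewrite h ?h'.
have hti : i < L + (tt i)%:Z.
  rewrite /tt; have := gez0_abs (m := i - L); rewrite subr_ge0 => /(_ hiL); lia.
case: (leqP (tt i) t) => h.
  by symmetry; apply: (As_chain (tt i) t n h).
by apply: (As_chain t (tt i) n (ltnW h)).
Qed.

Lemma alim_vexp : vexp f alim.
Proof.
have ht : forall l, exists t : nat, l <= L + t%:Z.
  move=> l; exists (absz (l - L)%R).
  case: (lerP 0 (l - L)) => h; first by have := gez0_abs h; lia.
  lia.
split.
  move=> l; have [t ht'] := ht l; exists (Bs t) => n hn i hi.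
  rewrite (alim_agr t n i); last by apply: lt_le_trans hi ht'.
  by case: (As_inv t) => h _ _; apply: h.
move=> l; have [t ht'] := ht l; exists (Bs t) => N hN x i hi.
have hi' : i < L + t%:Z by apply: lt_le_trans hi ht'.
case: (As_inv t) => h1 h2 h3.
rewrite (h3 x i hi') -(psum_ext (As t) (Bs t) N x i hN h1) !psumE.
apply: eq_bigr => n _.
have hvge : vge (alim n) L by move=> j hj; rewrite /= /acoef; case: (As_inv (tt j)) => _ h _; apply: h.
have := kmul_agr (As t n) (alim n) (b n x) (b n x) L 0 (L + t%:Z) t%:Z (h2 n) hvge (hb_O n x) (hb_O n x)
  (agr_sym _ _ _ (alim_agr t n)) (agr_refl _ _).
by move=> /(_ i); apply; rewrite lt_min; apply/andP; split; lia.
Qed.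

End Exist.

Theorem onb : orthonormal_basis b.
Proof.
split; first by move=> n; apply/kcontinuousP.
move=> f /kcontinuousP hf.
split.
  have [L [_ hL]] := kcont_vge f hf.
  by exists (alim f hf L hL); apply/expansionP => //; apply: alim_vexp.
split.
  move=> a a' /(expansionP _ _ hf) h /(expansionP _ _ hf) h'.
  exact: vexp_unique h h'.
by move=> a /(expansionP _ _ hf) h; apply: vexp_norm.
Qed.

End ONB.


Section Comb.
Context {F : finFieldType}.
Local Notation q := (qq F).

Lemma wilson : \prod_(c : F | c != 0) c = -1.
Proof.
have h := finField_genPoly F.
rewrite (bigD1 0) //= subr0 in h.
have hX : 'X^#|F| - 'X = 'X * ('X^(#|F|.-1) - 1) :> {poly F}.
  by rewrite mulrBr mulr1 -exprS prednK // (ltn_trans _ (qq_gt1 (F:=F))).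
rewrite hX in h.
have h2 := mulfI (negbT (@polyX_eq0 F)) h.
have := congr1 (fun p => p.[0]) h2; rewrite /= horner_prod !hornerE.
have hq0 : (#|F|.-1 == 0)%N = false.
  by apply/negbTE; rewrite -lt0n; have := qq_gt1 (F:=F); rewrite /qq; case: #|F| => [|[|k]].
rewrite expr0n hq0 [X in X - 1 = _](_ : _ = 0) // sub0r.
under eq_bigr do rewrite hornerXsubC sub0r.
have hp : \prod_(i | i != 0) - i = (-1) ^+ #|F|.-1 * \prod_(i | i != 0) i :> F.
  rewrite -(cardC1 (0 : F)); exact: (prodrN (predC1 0) id).
rewrite hp.
have -> : (-1 : F) ^+ #|F|.-1 = 1.
  have := pow_q1 (-1 : F); rewrite oppr_eq0 oner_eq0; exact.
rewrite mul1r => e; by rewrite e.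
Qed.

Definition fz (u : seq F) : nat := find (fun c => c != 0) u.

Definition sN (n : nat) : nat := \sum_(1 <= i < n.+1) q ^ (n - i).

Lemma sN_S n : sN n.+1 = (q ^ n + sN n)%N.
Proof.
rewrite /sN big_nat_recl // subn1 /=; congr (_ + _)%N; by apply: eq_bigr => i _; rewrite subSS.
Qed.

Lemma big_tuple_cons (R : Type) (idx : R) (op : Monoid.com_law idx) n
  (g : n.+1.-tuple F -> R) :
  \big[op/idx]_(u : n.+1.-tuple F) g u =
  \big[op/idx]_(c : F) \big[op/idx]_(t : n.-tuple F) g [tuple of c :: t].
Proof.
rewrite pair_big /=.
rewrite (reindex (fun p : F * n.-tuple F => [tuple of p.1 :: p.2])) //=.
exists (fun u : n.+1.-tuple F => (thead u, [tuple of behead u])).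
  by move=> [c t] _ /=; congr pair; apply: val_inj.
by move=> u _; rewrite [in RHS](tuple_eta u).
Qed.

Lemma CL n (a : F) : (\sum_(u : n.-tuple F) fz u = sN n)%N /\
  \prod_(u : n.-tuple F) nth a u (fz u) = a * (-1) ^+ sN n.
Proof.
elim: n a => [|n IH] a.
  have -> : sN 0 = 0%N by rewrite /sN big_geq.
  split.
    by rewrite (big_pred1 [tuple]) // => t; apply/eqP; rewrite [t]tuple0.
  rewrite (big_pred1 [tuple]) ?expr0 ?mulr1 // => t; apply/eqP; rewrite [t]tuple0.
  by [].
have [IH1 IH2] := IH a.
split.
  rewrite (big_tuple_cons _ 0%N addn) /= (bigD1 0) //=.
  have e2 : (\sum_(c : F | c != 0%R) \sum_(t : n.-tuple F) fz [tuple of c :: t] = 0)%N.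
    by apply: big1 => c hc; apply: big1 => t _; rewrite /fz /= hc.
  rewrite e2 addn0.
  rewrite (eq_bigr (fun t : n.-tuple F => (fz t).+1)); last by move=> t _; rewrite /fz /= eqxx.
  have e3 : (\sum_(t : n.-tuple F) (fz t).+1 = \sum_(t : n.-tuple F) fz t + \sum_(t : n.-tuple F) 1)%N.
    by rewrite -big_split; apply: eq_bigr => t _; exact: esym (addn1 (fz t)).
  by rewrite e3 IH1 sum1_card card_tuple sN_S addnC.
rewrite (big_tuple_cons _ (1 : F) *%R) /= (bigD1 0) //=.
rewrite (eq_bigr (fun t : n.-tuple F => nth a t (fz t))); last first.
  by move=> t _; rewrite /fz /= eqxx.
rewrite IH2 (eq_bigr (fun c => c ^+ (q ^ n))); last first.
  move=> c hc; rewrite (eq_bigr (fun _ => c)); last by move=> t _; rewrite /fz /= hc.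
  by rewrite prodr_const card_tuple.
rewrite prodrXl wilson sN_S exprD.
ring.
Qed.

End Comb.


Lemma sumz (T : Type) (r : seq T) (g : T -> nat) : \sum_(i <- r) ((g i)%:Z : int) = (\sum_(i <- r) g i)%N%:Z.
Proof. by elim: r => [|i r IH]; rewrite ?big_nil ?big_cons // IH. Qed.

Section En.
Context {F : finFieldType}.
Local Notation K := (K F).
Local Notation O := (O F).
Local Notation q := (qq F).
Local Notation sN := (@sN F).
Implicit Types (x : O).

Lemma q_pow_gt1 i : (0 < i)%N -> (1 < q ^ i)%N.
Proof.
move=> hi; apply: leq_trans (qq_gt1 (F:=F)) _.
by rewrite -{1}(expn1 q) leq_pexp2l // ltnW // qq_gt1.
Qed.

Lemma Fpol_coef n : (forall i, (i < sN n)%N -> (Fpol F n)`_i = 0) /\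
  (Fpol F n)`_(sN n) = (-1) ^+ sN n.
Proof.
pose Q := \prod_(1 <= i < n.+1) ('X^((q ^ i).-1) - 1) ^+ (q ^ (n - i)) : {poly F}.
have hF : Fpol F n = 'X^(sN n) * Q.
  rewrite /Fpol /sN /Q -prodrXr -big_split /=.
  apply: eq_big_nat => i /andP[hi _].
  rewrite /bracket -exprMn; congr (_ ^+ _).
  by rewrite mulrBr mulr1 -exprS prednK // ltnW // q_pow_gt1.
have hQ0 : Q`_0 = (-1) ^+ sN n.
  rewrite -horner_coef0 /Q horner_prod /sN -prodrXr.
  apply: eq_big_nat => i /andP[hi _].
  rewrite !hornerE expr0n.
  have -> : ((q ^ i).-1 == 0)%N = false.
    by apply/negbTE; rewrite -lt0n; have := q_pow_gt1 i hi; case: (q ^ i)%N => [|[|k]].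
  by rewrite sub0r.
split.
  by move=> i hi; rewrite hF coefXnM hi.
by rewrite hF coefXnM ltnn subnn hQ0.
Qed.

Lemma kpolyE (p : {poly F}) (k : nat) : kcoef (kpoly p) k%:Z = p`_k.
Proof. by []. Qed.
Lemma kpolyN (p : {poly F}) n : n < 0 -> kcoef (kpoly p) n = 0.
Proof. by case: n. Qed.

Lemma Fpol_lead n : vge (kpoly (Fpol F n)) (sN n)%:Z /\
  kcoef (kpoly (Fpol F n)) (sN n)%:Z = (-1) ^+ sN n.
Proof.
have [h1 h2] := Fpol_coef n; split; last by rewrite kpolyE.
case=> [k|k] hk; last by rewrite kpolyN.
by rewrite kpolyE h1 // -ltz_nat.
Qed.

Lemma kinv_lead (y : K) v : vge y v -> kcoef y v != 0 ->
  vge (kinv y) (- v) /\ kcoef (kinv y) (- v) = (kcoef y v)^-1.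
Proof.
move=> hv hn; have hk := kval_some y v hv hn.
split.
  move=> i hi; rewrite /kinv /= /kinv_coef hk.
  by case E: (i + v) => [k|k] //; lia.
rewrite /kinv /= /kinv_coef hk.
have -> : - v + v = 0 by rewrite addNr.
by rewrite /invc /= addr0.
Qed.

Definition utup (x : O) (n : nat) (t : n.-tuple F) : n.-tuple F :=
  [tuple dig x i - nth 0 t i | i < n].

Lemma utup_nth x n t k : (k < n)%N -> nth 0 (utup x n t) k = dig x k - nth 0 t k.
Proof.
by move=> hk; rewrite -[k]/(nat_of_ord (Ordinal hk)) -tnth_nth tnth_mktuple.
Qed.

Lemma utup_inj x n : injective (utup x n).
Proof.
move=> t1 t2 h; apply: eq_from_tnth => i.
have := congr1 (fun u : n.-tuple F => nth 0 (tval u) i) h; rewrite /= !utup_nth // !(tnth_nth 0) => e.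
by apply: oppr_inj; apply: (addrI (dig x i)).
Qed.

Lemma factor_coef x n (t : n.-tuple F) (k : nat) :
  kcoef (ksub (oval x) (kpoly (Poly t))) k%:Z = dig x k - nth 0 t k.
Proof. by rewrite ksubE kpolyE coef_Poly. Qed.

Lemma factor_lead x n (t : n.-tuple F) :
  vge (ksub (oval x) (kpoly (Poly t))) (fz (utup x n t))%:Z /\
  kcoef (ksub (oval x) (kpoly (Poly t))) (fz (utup x n t))%:Z =
    nth (dig x n) (utup x n t) (fz (utup x n t)).
Proof.
set u := utup x n t.
have hsz : size u = n by rewrite size_tuple.
have hfz : (fz u <= n)%N by rewrite -{2}hsz find_size.
split.
  case=> [k|k] hk; last by rewrite ksubE oneg // kpolyN // subr0.
  have hk' : (k < fz u)%N by rewrite -ltz_nat.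
  rewrite factor_coef -utup_nth; last exact: leq_trans hk' hfz.
  by have := before_find 0 hk'; rewrite -/u => /negbFE /eqP.
rewrite factor_coef; case: (ltnP (fz u) n) => h.
  by rewrite -utup_nth // (set_nth_default 0) // hsz.
have e : fz u = n by apply/eqP; rewrite eqn_leq hfz h.
by rewrite e nth_default ?size_tuple // subr0 nth_default // hsz.
Qed.


Lemma en_lead x n : vge (e_n n (oval x)) (sN n)%:Z /\
  kcoef (e_n n (oval x)) (sN n)%:Z = dig x n * (-1) ^+ sN n.
Proof.
have [h1 h2] := kprod_lead _ (fun t : n.-tuple F => ksub (oval x) (kpoly (Poly t)))
  (fun t => (fz (utup x n t))%:Z) (enum {: n.-tuple F}) (fun t => (factor_lead x n t).1).
have [c1 c2] := CL n (dig x n).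
have E1 : (\sum_(u : n.-tuple F) fz u = \sum_(t : n.-tuple F) fz (utup x n t))%N.
  exact: reindex_inj (utup_inj x n).
have E2 : \prod_(u : n.-tuple F) nth (dig x n) u (fz u) =
    \prod_(t : n.-tuple F) nth (dig x n) (utup x n t) (fz (utup x n t)).
  exact: reindex_inj (utup_inj x n).
have S1 : \sum_(t <- enum {: n.-tuple F}) (fz (utup x n t))%:Z = (sN n)%:Z.
  by rewrite sumz big_enum /= -E1 c1.
have S2 : \prod_(t <- enum {: n.-tuple F}) kcoef (ksub (oval x) (kpoly (Poly t))) (fz (utup x n t))%:Z
    = dig x n * (-1) ^+ sN n.
  rewrite (eq_bigr (fun t => nth (dig x n) (utup x n t) (fz (utup x n t)))); last first.
    by move=> t _; rewrite (factor_lead x n t).2.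
  by rewrite big_enum /= -E2 c2.
rewrite S1 in h1 h2; rewrite S2 in h2.
by split.
Qed.

Lemma En_lead n x : vge (E_n n (oval x)) 0 /\ kcoef (E_n n (oval x)) 0 = dig x n.
Proof.
case: n => [|n]; first by split; [exact: O_vge | by []].
have [f1 f2] := Fpol_lead n.+1.
have hnz : kcoef (kpoly (Fpol F n.+1)) (sN n.+1)%:Z != 0.
  by rewrite f2 expf_neq0 // oppr_eq0 oner_eq0.
have [i1 i2] := kinv_lead _ _ f1 hnz.
have [e1 e2] := en_lead x n.+1.
rewrite /E_n /kdiv.
have := kmul_vge _ _ _ _ e1 i1; have := kmul_lead _ _ _ _ e1 i1.
rewrite addrN => h1 h2; split => //.
rewrite h1 e2 i2 f2 -mulrA mulfV ?mulr1 //.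
by rewrite expf_neq0 // oppr_eq0 oner_eq0.
Qed.

Lemma kcont_mulcr (c : K) (g : O -> K) : kcont g -> kcont (fun x => kmul (g x) c).
Proof.
move=> hg x l.
have [k hk] := hg x (l - klb c).
exists k => y hy.
set Ly := Num.min (l - klb c) (klb (g x)).
have h1 : vge (g x) Ly by apply: vgeW (vge_klb _); rewrite ge_min lexx orbT.
have h2 : vge (g y) Ly.
  move=> n hn; rewrite (hk y hy n); first exact: h1.
  by apply: lt_le_trans hn _; rewrite ge_min lexx.
have := kmul_agr (g y) (g x) c c Ly (klb c) (l - klb c) (l - Ly) h2 h1 (vge_klb c) (vge_klb c)
  (hk y hy) (agr_refl _ _).
by have -> : Num.min (l - klb c + klb c) (l - Ly + Ly) = l by rewrite !subrK minxx.
Qed.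

Lemma kcont_prodl (T : Type) (r : seq T) (g : T -> O -> K) :
  (forall i, kcont (g i)) -> (forall i x, vge (g i x) 0) ->
  kcont (fun x => kprod (map (fun i => g i x) r)).
Proof.
move=> hg h0; elim: r => [|i r IH]; first exact: kcont_const.
apply: (kcont_mul0 (g i) (fun x => kprod (map (fun i => g i x) r))) => // x.
by case: (kprod_O T (fun i => g i x) r (fun i => h0 i x)).
Qed.

Lemma kcont_kexp (g : O -> K) k : kcont g -> (forall x, vge (g x) 0) ->
  kcont (fun x => kexp (g x) k).
Proof.
move=> hg h0; elim: k => [|k IH]; first exact: kcont_const.
apply: (kcont_mul0 g (fun x => kexp (g x) k)) => // x.
by case: (kexp_O (g x) k (h0 x)).
Qed.

Lemma En_cont n : kcont (fun x : O => E_n n (oval x)).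
Proof.
case: n => [|n]; first exact: kcont_oval.
rewrite /E_n /kdiv; apply: kcont_mulcr.
rewrite /e_n; apply: (kcont_prodl _ _ (fun t (x : O) => ksub (oval x) (kpoly (Poly (tval t))))).
  by move=> t; apply: kcont_sub; [exact: kcont_oval | exact: kcont_const].
by move=> t x k hk; rewrite ksubE oneg // kpolyN // subr0.
Qed.

End En.


Section Fam.
Context {F : finFieldType}.
Local Notation K := (K F).
Local Notation O := (O F).
Local Notation q := (qq F).

Lemma powqm (y : F) m : y ^+ (q ^ m) = y.
Proof.
elim: m => [|m IH]; first by rewrite expn0 expr1.
by rewrite expnS exprM expf_card IH.
Qed.

Variable phi : nat -> O -> K.
Hypothesis hphi_c : forall n, kcont (phi n).
Hypothesis hphi_0 : forall n x, vge (phi n x) 0.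
Hypothesis hphi_r : forall n x, kcoef (phi n x) 0 = dig x n.
Variable m : nat.

Definition fam (j : nat) (x : O) : K :=
  kexp (kprod [seq kexp (phi n x) (digit F j n) | n <- iota 0 (top_digit F j).+1]) (q ^ m).

Lemma fam_prod_O j x : vge (kprod [seq kexp (phi n x) (digit F j n) | n <- iota 0 (top_digit F j).+1]) 0 /\
  kcoef (kprod [seq kexp (phi n x) (digit F j n) | n <- iota 0 (top_digit F j).+1]) 0 =
  \prod_(n <- iota 0 (top_digit F j).+1) (dig x n) ^+ digit F j n.
Proof.
have [h1 h2] := kprod_O _ (fun n => kexp (phi n x) (digit F j n)) (iota 0 (top_digit F j).+1)
  (fun n => (kexp_O (phi n x) (digit F j n) (hphi_0 n x)).1).
split => //; rewrite h2; apply: eq_bigr => n _.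
by rewrite (kexp_O (phi n x) (digit F j n) (hphi_0 n x)).2 hphi_r.
Qed.

Lemma fam_onb : orthonormal_basis fam.
Proof.
apply: onb.
- move=> j; apply: kcont_kexp; last by move=> x; case: (fam_prod_O j x).
  apply: (kcont_prodl _ _ (fun n x => kexp (phi n x) (digit F j n))).
    by move=> n; apply: kcont_kexp.
  by move=> n x; case: (kexp_O (phi n x) (digit F j n) (hphi_0 n x)).
- move=> j x; have [h1 _] := fam_prod_O j x.
  by case: (kexp_O _ (q ^ m) h1).
move=> j x; have [h1 h2] := fam_prod_O j x.
rewrite /fam (kexp_O _ (q ^ m) h1).2 powqm h2.
have -> : iota 0 (top_digit F j).+1 = index_iota 0 (top_digit F j).+1 by rewrite /index_iota subn0.
rewrite big_mkord (M_mono (top_digit F j).+1) //.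
exact: trunc_log_ltn (qq_gt1 (F:=F)).
Qed.

End Fam.

Section Hasse.
Context {F : finFieldType}.
Local Notation O := (O F).

Lemma hasse_vge n (x : O) : vge (hasse n (oval x)) 0.
Proof.
move=> k hk; rewrite /hasse /= /hasse_coef.
case E: (k + n%:Z) => [i|i] //.
rewrite bin_small ?mul0r //.
have : (i%:Z < n%:Z) by rewrite -E; lia.
by rewrite ltz_nat.
Qed.

Lemma hasse_red n (x : O) : kcoef (hasse n (oval x)) 0 = dig x n.
Proof.
rewrite /hasse /= /hasse_coef add0r binn mul1r.
by [].
Qed.

Lemma hasse_cont n : kcont (fun x : O => hasse n (oval x)).
Proof.
move=> x l; exists (absz (l + n%:Z)%R) => y hy i hi.
rewrite /hasse /= /hasse_coef.
case E: (i + n%:Z) => [j|j] //.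
rewrite -E hy //.
case: (lerP 0 (l + n%:Z)) => h; first by have := gez0_abs h; lia.
lia.
Qed.

End Hasse.

Local Close Scope ring_scope.

Theorem corollary5 (F : finFieldType) (m : nat) :
  orthonormal_basis (fun j (x : O F) => kexp (G j x) (qq F ^ m)) /\
  orthonormal_basis (fun j (x : O F) => kexp (D j x) (qq F ^ m)).
Proof.
split.
  exact: (fam_onb (fun n (x : O F) => E_n n (oval x)) En_cont
    (fun n x => (En_lead n x).1) (fun n x => (En_lead n x).2) m).
exact: (fam_onb (fun n (x : O F) => hasse n (oval x)) hasse_cont hasse_vge hasse_red m).
Qed.
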